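(* Let $L\ge2$ be an integer and $r\in[0,\frac{L}{L+1})$. There exists an integer $n(r,L)$ such that for every prime power $q$ and every $n\ge n(r,L)$ with $rn\in\mathbb{N}$, every linear $[n,k]_q$ code that is $(r,L)$ list-decodable satisfies $k\le n-\lceil\frac{L+1}{L}rn\rceil$.
   Context: A linear $[n,k]_q$ code is a $k$-dimensional subspace of $\mathbb{F}_q^n$. $B_t(v)$ is the Hamming ball of radius $t$ around $v$. A code $C$ is $(r,L)$ list-decodable if $|B_{rn}(v)\cap C|\le L$ for every $v\in\mathbb{F}_q^n$. *)

(* Defs.v *)
From HB Require Import structures.
From mathcomp Require Import all_boot all_order all_algebra all_field.
From mathcomp Require Import reals.
Set Implicit Arguments. Unset Strict Implicit. Unset Printing Implicit Defensive.
Import Order.TTheory GRing.Theory Num.Theory.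

Definition hamming (F : finFieldType) (n : nat) (u v : 'rV[F]_n) : nat :=
  #|[set i : 'I_n | u ord0 i != v ord0 i]|.

Definition hball (F : finFieldType) (n : nat) (t : nat) (v : 'rV[F]_n)
  : {set 'rV[F]_n} := [set w | hamming v w <= t].

(* A linear code C (subspace of F^n) is list-decodable with radius t (= r n)
   and list size L: every Hamming ball of radius t contains at most L codewords. *)
Definition list_decodable (F : finFieldType) (n : nat) (C : {vspace 'rV[F]_n})
  (t L : nat) : Prop :=
  forall v : 'rV[F]_n, #|[set c in hball t v | c \in C]| <= L.

(* Main.v *)
Require Import Defs.
From HB Require Import structures.
From mathcomp Require Import all_boot all_order all_algebra all_field.
From mathcomp Require Import zify.
From mathcomp Require Import reals lra.
Set Implicit Arguments. Unset Strict Implicit. Unset Printing Implicit Defensive.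
Import Order.TTheory GRing.Theory Num.Theory.
Local Open Scope ring_scope.

Section Core.
Variables (F : finFieldType) (n : nat).
Implicit Types (C U V : {vspace 'rV[F]_n}).

Lemma dimrV : \dim (fullv : {vspace 'rV[F]_n}) = n.
Proof. by rewrite dimvf /dim /= mul1n. Qed.

Lemma delta_val (w q : 'I_n) : (delta_mx 0 w : 'rV[F]_n) 0 q = (w == q)%:R.
Proof. by rewrite mxE eq_sym. Qed.

Lemma units_full V : (forall q : 'I_n, 'e_q \in V) -> V = fullv.
Proof.
move=> H; apply/eqP; rewrite eqEsubv subvf /=; apply/subvP => x _.
rewrite [x]row_sum_delta; apply: memv_suml => i _; exact: memvZ.
Qed.

Lemma greedy C : exists (J : {set 'I_n}) (U : {vspace 'rV[F]_n}),
  [/\ (C + U)%VS = fullv, (#|J| + \dim C <= n)%N &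
      forall u, u \in U -> forall q, q \notin J -> u 0 q = 0].
Proof.
suff main : forall d (J : {set 'I_n}) U, (n - \dim (C + U) <= d)%N ->
   (\dim C + #|J| <= \dim (C + U))%N ->
   (forall u, u \in U -> forall q, q \notin J -> u 0 q = 0) ->
   exists (J : {set 'I_n}) (U : {vspace 'rV[F]_n}),
  [/\ (C + U)%VS = fullv, (#|J| + \dim C <= n)%N &
      forall u, u \in U -> forall q, q \notin J -> u 0 q = 0].
  apply: (main n set0 0%VS).
  - by rewrite leq_subr.
  - by rewrite cards0 addn0 addv0.
  - by move=> u; rewrite memv0 => /eqP -> q _; rewrite mxE.
elim=> [|d IH] J U Hd Hdim Hv.
  exists J, U; split => //.
    apply/eqP; rewrite eqEdim subvf dimrV /=; lia.
  move: (dimvS (subvf (C + U))); rewrite dimrV.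
  lia.
have [Hf|Hf] := eqVneq (C + U)%VS fullv.
  exists J, U; split => //.
  move: (dimvS (subvf (C + U))); rewrite dimrV.
  lia.
have [q Hq] : exists q : 'I_n, 'e_q \notin (C + U)%VS.
  have : ~~ [forall q : 'I_n, 'e_q \in (C + U)%VS].
    by apply/negP => /forallP H; move/eqP: Hf; apply; apply: units_full.
  by rewrite negb_forall => /existsP.
have sub1 : (C + U <= C + (U + <['e_q]>))%VS.
  by apply: addvS => //; apply: addvSl.
have Hin : 'e_q \in (C + (U + <['e_q]>))%VS.
  apply: subvP (memv_line _); rewrite addvA; apply: addvSr.
have Hlt : (\dim (C + U) < \dim (C + (U + <['e_q]>)))%N.
  rewrite ltn_neqAle (dimvS sub1) andbT.
  rewrite (dimv_leqif_eq sub1); apply/negP => /eqP E.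
  by move: Hq; rewrite E Hin.
apply: (IH (q |: J) (U + <['e_q]>)%VS).
- lia.
- rewrite cardsU1; have := leq_b1 (q \notin J); lia.
- move=> u /memv_addP [a Ha [b /vlineP [k ->] ->]] r; rewrite !inE negb_or.
  case/andP => Hrq HrJ; rewrite !mxE (Hv a Ha r HrJ) eqxx add0r.
  by rewrite (negbTE Hrq) mulr0.
Qed.

End Core.
Lemma pick_inj (T : finType) (A : {set T}) m : (m <= #|A|)%N ->
  exists f : 'I_m -> T, injective f /\ forall j, f j \in A.
Proof.
move=> Hm; exists (fun j => enum_val (widen_ord Hm j)); split.
  by move=> i j /enum_val_inj /(congr1 val) /= H; apply: val_inj.
by move=> j; have := enum_valP (widen_ord Hm j).
Qed.

Lemma card_split (T : finType) (A : {set T}) (P : pred T) :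
  (#|[set x in A | P x]| + #|[set x in A | ~~ P x]|)%N = #|A|.
Proof.
rewrite -(cardsID [set x | P x] A); congr addn; apply: eq_card => x;
  by rewrite !inE andbC.
Qed.

Lemma subset_size (T : finType) (A : {set T}) m : (m <= #|A|)%N ->
  exists B : {set T}, [/\ B \subset A & #|B| = m].
Proof.
move=> /pick_inj [f [injf fA]]; exists [set f j | j in 'I_m]; split.
  by apply/subsetP => x /imsetP [j _ ->].
by rewrite card_imset // card_ord.
Qed.

Lemma partition_lem (T I : finType) (i0 : I) (l : seq I) (A : {set T}) b :
  uniq l -> (size l * b <= #|A|)%N ->
  exists s : T -> I, forall i, i \in l -> (b <= #|[set x in A | s x == i]|)%N.
Proof.
elim: l A => [|i l IH] A /=; first by move=> _ _; exists (fun _ => i0).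
case/andP => Hil Hu Hs.
have [B [BA cB]] : exists B : {set T}, [/\ B \subset A & #|B| = b].
  by apply: subset_size; lia.
have [s Hs'] : exists s : T -> I, forall j, j \in l ->
    (b <= #|[set x in A :\: B | s x == j]|)%N.
  apply: IH => //; have := cardsID B A; rewrite (setIidPr BA); lia.
exists (fun x => if x \in B then i else s x) => j; rewrite inE => /orP [/eqP ->|Hj].
  rewrite -cB; apply: subset_leq_card; apply/subsetP => x Hx.
  by rewrite inE Hx (subsetP BA x Hx) eqxx.
apply: (leq_trans (Hs' j Hj)); apply: subset_leq_card; apply/subsetP => x.
rewrite !inE => /andP [/andP [HxB HxA] /eqP Hsx]; rewrite HxA (negbTE HxB) /=.
by rewrite Hsx.
Qed.
Lemma card_sum (T : finType) (A : {set T}) (P : pred T) :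
  #|[set x in A | P x]| = (\sum_(x in A) (P x : nat))%N.
Proof.
rewrite -sum1_card big_mkcond [RHS]big_mkcond /=; apply: eq_bigr => x _.
by rewrite !inE; case: (x \in A); case: (P x).
Qed.

Lemma ball_big (F : finFieldType) n (C : {vspace 'rV[F]_n}) t L v
  (X : option 'I_L -> 'rV[F]_n) : injective X -> (forall i, X i \in C) ->
  (forall i, hamming v (X i) <= t)%N ->
  (L < #|[set c in hball t v | c \in C]|)%N.
Proof.
move=> injX XC Xh.
have <- : #|[set X i | i : option 'I_L]| = L.+1.
  by rewrite card_imset // card_option card_ord.
apply: subset_leq_card; apply/subsetP => x /imsetP [i _ ->].
by rewrite !inE XC Xh.
Qed.

Lemma card_U1_le (T : finType) (x : T) (A : {set T}) m :
  (#|A| < m)%N -> (#|x |: A| <= m)%N.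
Proof. by rewrite cardsU1; have := leq_b1 (x \notin A); lia. Qed.

Lemma num2 (B1 s' nJ nC k n t L : nat) : (s' + B1 = nC)%N -> (nJ + nC = n)%N ->
  ~~ (L <= s')%N -> (nJ + k <= n)%N -> (B1 * t <= nJ * (L - 1))%N ->
  (L * (n - k) < L.+1 * t)%N -> (2 * L <= k)%N -> False.
Proof.
move=> h1 h2 h3 h4 h5 h6 h7.
have hB : (L.+1 <= B1)%N by lia.
have e1 : (L.+1 * t <= B1 * t)%N by apply: leq_mul.
have e2 : (nJ * (L - 1) <= (n - k) * L)%N by apply: leq_mul; lia.
rewrite [(L * _)%N]mulnC in h6.
move: e1 e2 h5 h6; move: (L.+1 * t)%N (B1 * t)%N (nJ * (L - 1))%N ((n - k) * L)%N.
move=> a b c d; lia.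
Qed.

Lemma num1 N t L nk : (N + 1 <= nk)%N -> (L * nk < L.+1 * t)%N ->
  (L.+1 * (N - (t - 1)) <= N)%N.
Proof.
move=> HN1 Hm.
case: (leqP N (t - 1)) => HN.
  by rewrite (_ : (N - (t - 1) = 0)%N) ?muln0 //; lia.
have h1 : (L * (N - (t - 1)) <= L * (nk - t))%N by apply: leq_mul; lia.
have h2 : (L * (nk - t) = L * nk - L * t)%N by rewrite mulnBr.
have h3 : (L.+1 * t = t + L * t)%N by rewrite mulSn.
rewrite mulSn; move: h1 h2 h3 Hm.
move: (L * (N - (t - 1)))%N (L * (nk - t))%N (L.+1 * t)%N => a b e.
move: (L * nk)%N (L * t)%N => c d; lia.
Qed.

Lemma core (F : finFieldType) (n : nat) (C : {vspace 'rV[F]_n}) (L t : nat) :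
  (2 * L <= \dim C)%N -> (L * (n - \dim C) < L.+1 * t)%N ->
  exists v : 'rV[F]_n, (L < #|[set c in hball t v | c \in C]|)%N.
Proof.
move=> HkL Hm.
set k := \dim C in HkL Hm.
have [J [U [HCU HJ HU]]] := greedy C.
pose y (w : 'I_n) : 'rV[F]_n :=
  odflt 0 [pick c | (c \in C) && ('e_w - c \in U)].
have Hy : forall w, y w \in C /\ forall q, q \notin J -> y w 0 q = (w == q)%:R.
  move=> w.
  have : 'e_w \in (C + U)%VS by rewrite HCU memvf.
  case/memv_addP => c Hc [u Hu E].
  rewrite /y; case: pickP => [c' /andP [Hc' Hu']|Hn] /=; last first.
    by have := Hn c; rewrite Hc E addrC addKr Hu.
  split=> // q Hq.
  have := HU _ Hu' q Hq; rewrite !mxE eqxx /= => /eqP; rewrite subr_eq0 => /eqP <-.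
  by rewrite eq_sym.
have HyC : forall w, y w \in C by move=> w; case: (Hy w).
have Hyv : forall w q, q \notin J -> y w 0 q = (w == q)%:R by move=> w; case: (Hy w).
have t_gt0 : (0 < t)%N by case: t Hm => //; rewrite muln0.
have Z0 : forall q, (0 : 'rV[F]_n) 0 q = 0 by move=> q; rewrite mxE.
case: (boolP [exists p, (p \in J) && leq L #|[set w in ~: J | y w 0 p != 0]|])
   => [/existsP [p /andP [Hp HS]]|HA].
  have [om [injom omS]] := pick_inj HS.
  have omJ : forall j, om j \notin J by move=> j; have := omS j; rewrite !inE => /andP [].
  have omp : forall j, y (om j) 0 p != 0 by move=> j; have := omS j; rewrite !inE => /andP [].
  pose X (i : option 'I_L) : 'rV[F]_n :=
    if i is Some j then (y (om j) 0 p)^-1 *: y (om j) else 0.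
  have Xp : forall j, X (Some j) 0 p = 1 by move=> j; rewrite /X mxE mulVf // omp.
  have Xq : forall j q, q \notin J -> X (Some j) 0 q = (y (om j) 0 p)^-1 * (om j == q)%:R.
    by move=> j q Hq; rewrite /X mxE (Hyv _ _ Hq).
  have injX : injective X.
    case=> [j|] [j'|] // E.
    - have := congr1 (fun M : 'rV_n => M 0 (om j)) E; rewrite /= !Xq ?omJ // eqxx mulr1.
      case: eqP => [/injom -> //|_]; rewrite mulr0 => /eqP; rewrite invr_eq0.
      by rewrite (negbTE (omp j)).
    - have := congr1 (fun M : 'rV_n => M 0 p) E; rewrite /= Xp Z0 => /eqP.
      by rewrite oner_eq0.
    - have := congr1 (fun M : 'rV_n => M 0 p) E; rewrite /= Xp Z0 => /eqP.
      by rewrite eq_sym oner_eq0.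
  set A := J :\ p.
  have cA : #|J| = (#|A|).+1 by rewrite (cardsD1 p J) Hp.
  have [sg Hsg] : exists sg : 'I_n -> option 'I_L, forall i,
      i \in enum [set: option 'I_L] -> (#|A| - (t - 1) <= #|[set x in A | sg x == i]|)%N.
    apply: (partition_lem None); first exact: enum_uniq.
    rewrite -cardE cardsT card_option card_ord.
    apply: (num1 (nk := n - k)) => //; lia.
  pose v : 'rV[F]_n := \row_q (if q \in J then (if q == p then 1 else X (sg q) 0 q) else 0).
  exists v; apply: (@ball_big _ _ _ _ _ _ X) => // [i|i].
    by case: i => [j|]; [apply: memvZ; apply: HyC | apply: mem0v].
  rewrite /hamming.
  pose ex := if i is Some j then om j else p.
  apply: (leq_trans (subset_leq_card (_ : _ \subset ex |: [set x in A | sg x != i]))).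
    apply/subsetP => q; rewrite !inE mxE.
    case: ifP => HqJ.
      have [->|Hqp] := eqVneq q p.
        by rewrite /ex; clearbody ex; case: i => [j|]; rewrite ?Xp ?eqxx.
      move=> H; apply/orP; right => /=.
      by apply: contra H => /eqP ->.
    rewrite /ex; clearbody ex; case: i => [j|]; last by rewrite Z0 eqxx.
    rewrite Xq ?HqJ //; have [->|_] := eqVneq (om j) q; first by rewrite ?eqxx.
    by rewrite mulr0 eqxx.
  rewrite cardsU1; have := card_split A (fun x => sg x == i).
  have := Hsg i; rewrite mem_enum in_setT => /(_ isT); have := leq_b1 (ex \notin [set x in A | sg x != i]).
  lia.
pose a (w : 'I_n) := #|[set q in J | y w 0 q != 0]|.
case: (boolP (leq L #|[set w in ~: J | (a w < t)%N]|)) => [HB|HB].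
  have [om [injom omS]] := pick_inj HB.
  have omJ : forall j, om j \notin J by move=> j; have := omS j; rewrite !inE => /andP [].
  have oma : forall j, (a (om j) < t)%N by move=> j; have := omS j; rewrite !inE => /andP [].
  have Hyw : forall j, y (om j) 0 (om j) = 1 by move=> j; rewrite Hyv ?omJ // eqxx.
  pose X (i : option 'I_L) : 'rV[F]_n := if i is Some j then y (om j) else 0.
  have injX : injective X.
    case=> [j|] [j'|] // E.
    - have := congr1 (fun M : 'rV_n => M 0 (om j)) E; rewrite /= Hyw Hyv ?omJ //.
      have [/injom -> //|_] := eqVneq (om j') (om j).
      by move/eqP; rewrite oner_eq0.
    - have := congr1 (fun M : 'rV_n => M 0 (om j)) E; rewrite /= Hyw Z0 => /eqP.
      by rewrite oner_eq0.
    - have := congr1 (fun M : 'rV_n => M 0 (om j')) E; rewrite /= Hyw Z0 => /eqP.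
      by rewrite eq_sym oner_eq0.
  exists 0; apply: (@ball_big _ _ _ _ _ _ X) => // [i|i].
    by case: i => [j|]; [apply: HyC | apply: mem0v].
  rewrite /hamming; case: i => [j|]; last first.
    rewrite (_ : [set _ | _] = set0) ?cards0 //; apply/setP => q.
    by rewrite !inE /= eqxx.
  apply: (leq_trans (subset_leq_card (_ : _ \subset om j |: [set q in J | y (om j) 0 q != 0]))).
    apply/subsetP => q; rewrite !inE Z0 /= eq_sym => Hq.
    case: (boolP (q \in J)) => HqJ; first by rewrite Hq orbT.
    move: Hq; rewrite Hyv //.
    by rewrite /= orbF; apply: contraTT => Hne; rewrite eq_sym in Hne; rewrite (negbTE Hne) /= negbK.
  by apply: card_U1_le; apply: oma.
exfalso.
pose Sq (q : 'I_n) := #|[set w in ~: J | y w 0 q != 0]|.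
have Hsum : (\sum_(w in ~: J) a w = \sum_(q in J) Sq q)%N.
  rewrite /a /Sq; under eq_bigr do rewrite card_sum.
  under [RHS]eq_bigr do rewrite card_sum.
  exact: exchange_big.
have Hup : (\sum_(q in J) Sq q <= #|J| * (L - 1))%N.
  rewrite -sum_nat_const; apply: leq_sum => q Hq.
  move: HA; rewrite negb_exists => /forallP /(_ q); rewrite Hq /= -ltnNge -/(Sq q).
  lia.
have Hlow : (#|[set w in ~: J | ~~ (a w < t)%N]| * t <= \sum_(w in ~: J) a w)%N.
  rewrite card_sum big_distrl /=; apply: leq_sum => w _.
  by case: ltnP => //= H; rewrite mul1n.
have Hsplit := card_split (~: J) (fun w => (a w < t)%N).
have HcJ := cardsC J; rewrite card_ord in HcJ.
exact: (num2 Hsplit HcJ HB HJ (leq_trans Hlow (leq_trans (eq_leq Hsum) Hup)) Hm HkL).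
Qed.

Unset Implicit Arguments.

Theorem proposition3p6 (R : realType) (L : nat) (r : R) :
  (2 <= L)%N -> 0 <= r -> r < L%:R / (L.+1)%:R ->
  exists n0 : nat,
    forall (F : finFieldType) (n t : nat),
      (n0 <= n)%N -> r * n%:R = t%:R ->
      forall C : {vspace 'rV[F]_n},
        list_decodable C t L ->
        (\dim C)%:Z <= n%:Z - Num.ceil ((L.+1)%:R / L%:R * t%:R : R).
Proof.
move=> HL r0 rlt.
have l0 : (0 : R) < L%:R by rewrite ltr0n; lia.
have den : 0 < L%:R - L.+1%:R * r.
  by move: rlt; rewrite ltr_pdivlMr ?ltr0n // => h; lra.
pose c := 2 * L%:R ^+ 2 / (L%:R - L.+1%:R * r).
have c0 : 0 <= c by apply: divr_ge0; [by apply: mulr_ge0; [| apply: exprn_ge0; apply: ltW] | apply: ltW].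
have cE : c * (L%:R - L.+1%:R * r) = 2 * L%:R ^+ 2 by rewrite /c divfK // gt_eqF.
exists (Num.Def.archi_bound c).
move=> F n t Hn Ht C HC.
have Hnc : c < n%:R.
  by apply: (lt_le_trans (archi_boundP c0)); rewrite ler_nat.
have Hk : (\dim C <= n)%N by move: (dimvS (subvf C)); rewrite dimrV.
rewrite lerBrDl -lerBrDr ceil_le_int leNgt; apply/negP; rewrite rmorphB /= => Hlt.
have Hlt2 : L%:R * (n%:R - (\dim C)%:R) < L.+1%:R * t%:R :> R.
  have -> : L.+1%:R * t%:R = L%:R * (L.+1%:R / L%:R * t%:R) :> R.
    by rewrite mulrA mulrCA mulfV ?mulr1 // gt_eqF.
  by rewrite ltr_pM2l.
have H2 : (L * (n - \dim C) < L.+1 * t)%N.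
  by rewrite -(ltr_nat R) !natrM natrB.
have H1 : (2 * L <= \dim C)%N.
  rewrite -(ler_nat R) natrM; apply: ltW.
  move: Hlt2 Hnc cE den l0 Ht; move: (n%:R : R) (t%:R : R) ((\dim C)%:R : R) (L%:R : R).
  move=> N T K l *; nra.
have [v Hv] := core H1 H2.
by move: (HC v); rewrite leqNgt Hv.
Qed.
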